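(* Let $(X,d)$ be a compact metric space. If $X$ admits a conical bicombing, then $X$ admits an $\mathrm{Iso}(X)$-equivariant reversible conical bicombing.
   Context: A bicombing on $(X,d)$ is a map $\sigma\colon X\times X\times[0,1]\to X$ such that each $\sigma_{xy}:=\sigma(x,y,\cdot)$ is a geodesic from $x$ to $y$ ($\sigma_{xy}(0)=x$, $\sigma_{xy}(1)=y$, $d(\sigma_{xy}(s),\sigma_{xy}(t))=|s-t|d(x,y)$); it is conical if $d(\sigma_{xy}(t),\sigma_{x'y'}(t))\le(1-t)d(x,x')+t\,d(y,y')$ for all $x,y,x',y'$, $t\in[0,1]$, and reversible if $\sigma_{xy}(t)=\sigma_{yx}(1-t)$. It is $\mathrm{Iso}(X)$-equivariant if $f(\sigma(x,y,t))=\sigma(f(x),f(y),t)$ for all $(x,y,t)\in X\times X\times[0,1]$ and every isometry $f\colon X\to X$. *)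

(* Defs.v *)
From Stdlib Require Import Reals List.
Open Scope R_scope.

Definition is_metric {X : Type} (d : X -> X -> R) : Prop :=
  (forall x y, 0 <= d x y) /\
  (forall x y, d x y = 0 <-> x = y) /\
  (forall x y, d x y = d y x) /\
  (forall x y z, d x z <= d x y + d y z).

Definition open_set {X : Type} (d : X -> X -> R) (U : X -> Prop) : Prop :=
  forall x, U x -> exists e, 0 < e /\ forall y, d x y < e -> U y.

Definition compact_metric {X : Type} (d : X -> X -> R) : Prop :=
  forall (I : Type) (U : I -> X -> Prop),
    (forall i, open_set d (U i)) ->
    (forall x, exists i, U i x) ->
    exists l : list I, forall x, exists i, In i l /\ U i x.

Definition isometry {X : Type} (d : X -> X -> R) (f : X -> X) : Prop :=
  (forall x y, d (f x) (f y) = d x y) /\ (forall y, exists x, f x = y).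

Definition bicombing {X : Type} (d : X -> X -> R) (sigma : X -> X -> R -> X) : Prop :=
  forall x y,
    sigma x y 0 = x /\ sigma x y 1 = y /\
    (forall s t, 0 <= s <= 1 -> 0 <= t <= 1 ->
       d (sigma x y s) (sigma x y t) = Rabs (s - t) * d x y).

Definition conical {X : Type} (d : X -> X -> R) (sigma : X -> X -> R -> X) : Prop :=
  forall x y x' y' t, 0 <= t <= 1 ->
    d (sigma x y t) (sigma x' y' t) <= (1 - t) * d x x' + t * d y y'.

Definition reversible {X : Type} (sigma : X -> X -> R -> X) : Prop :=
  forall x y t, 0 <= t <= 1 -> sigma x y t = sigma y x (1 - t).

Definition iso_equivariant {X : Type} (d : X -> X -> R) (sigma : X -> X -> R -> X) : Prop :=
  forall f, isometry d f ->
    forall x y t, 0 <= t <= 1 -> f (sigma x y t) = sigma (f x) (f y) t.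

(* Main.v *)
Require Import Defs.
From Stdlib Require Import Reals Lra Lia List ClassicalEpsilon Classical.
Open Scope R_scope.

Lemma m_self {X} (d : X -> X -> R) : is_metric d -> forall x, d x x = 0.
Proof. intros (_&H&_) x. apply H; reflexivity. Qed.
Lemma m_pos {X} (d : X -> X -> R) : is_metric d -> forall x y, 0 <= d x y.
Proof. intros (H&_) ; auto. Qed.
Lemma m_sym {X} (d : X -> X -> R) : is_metric d -> forall x y, d x y = d y x.
Proof. intros (_&_&H&_); auto. Qed.
Lemma m_tri {X} (d : X -> X -> R) : is_metric d -> forall x y z, d x z <= d x y + d y z.
Proof. intros (_&_&_&H); auto. Qed.
Lemma m_eq {X} (d : X -> X -> R) : is_metric d -> forall x y, d x y = 0 -> x = y.
Proof. intros (_&H&_) x y; apply H. Qed.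

Definition K0 {X} (d : X -> X -> R) (s : X -> X -> R -> X) := bicombing d s /\ conical d s.

Lemma bic_const {X} (d : X -> X -> R) s : is_metric d -> bicombing d s ->
  forall x l, 0 <= l <= 1 -> s x x l = x.
Proof.
  intros Hm Hb x l Hl. destruct (Hb x x) as (H0&H1&H2).
  specialize (H2 0 l ltac:(lra) Hl). rewrite (m_self d Hm) in H2.
  rewrite Rmult_0_r in H2. apply (m_eq d Hm) in H2. congruence.
Qed.

Definition comb {X} (s s1 s2 : X -> X -> R -> X) (l : R) : X -> X -> R -> X :=
  fun a b t => s (s1 a b t) (s2 a b t) l.

Lemma comb_dist {X} (d : X -> X -> R) s : is_metric d -> K0 d s ->
  forall u v c l, 0 <= l <= 1 -> d (s u v l) c <= (1 - l) * d u c + l * d v c.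
Proof.
  intros Hm [Hb Hc] u v c l Hl.
  rewrite <- (bic_const d s Hm Hb c l Hl) at 1.
  apply Hc; auto.
Qed.

Lemma K0_comb {X} (d : X -> X -> R) s s1 s2 l : is_metric d -> 0 <= l <= 1 ->
  K0 d s -> K0 d s1 -> K0 d s2 -> K0 d (comb s s1 s2 l).
Proof.
  intros Hm Hl Hs [Hb1 Hc1] [Hb2 Hc2]. pose proof Hs as [Hb Hc]. unfold comb. split.
  - intros x y. destruct (Hb1 x y) as (A0&A1&A2). destruct (Hb2 x y) as (B0&B1&B2).
    rewrite A0, B0, A1, B1, !(bic_const d s Hm Hb); auto. repeat split; auto.
    intros s0 t Hs0 Ht.
    assert (Hup : forall s0 t, 0 <= s0 <= 1 -> 0 <= t <= 1 ->
       d (s (s1 x y s0) (s2 x y s0) l) (s (s1 x y t) (s2 x y t) l) <= Rabs (s0 - t) * d x y).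
    { intros a b Ha Hb'. eapply Rle_trans. apply Hc; auto.
      rewrite A2, B2 by auto. nra. }
    apply Rle_antisym; [apply Hup; auto|].
    (* lower bound via triangle *)
    assert (E0 : forall u, 0 <= u <= 1 -> d x (s (s1 x y u) (s2 x y u) l) <= u * d x y).
    { intros u Hu. specialize (Hup 0 u ltac:(lra) Hu).
      rewrite A0, B0, (bic_const d s Hm Hb) in Hup by auto.
      replace (Rabs (0 - u)) with u in Hup; auto.
      rewrite Rabs_minus_sym, Rabs_right; lra. }
    assert (E1 : forall u, 0 <= u <= 1 -> d (s (s1 x y u) (s2 x y u) l) y <= (1 - u) * d x y).
    { intros u Hu. specialize (Hup u 1 Hu ltac:(lra)).
      rewrite A1, B1, (bic_const d s Hm Hb) in Hup by auto.
      replace (Rabs (u - 1)) with (1 - u) in Hup; auto.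
      rewrite Rabs_minus_sym, Rabs_right; lra. }
    pose proof (m_pos d Hm x y).
    destruct (Rle_dec s0 t).
    + replace (Rabs (s0 - t)) with (t - s0) by (rewrite Rabs_minus_sym, Rabs_right; lra).
      pose proof (m_tri d Hm x (s (s1 x y s0) (s2 x y s0) l) y).
      pose proof (m_tri d Hm (s (s1 x y s0) (s2 x y s0) l) (s (s1 x y t) (s2 x y t) l) y).
      pose proof (E0 s0 Hs0). pose proof (E1 t Ht). nra.
    + replace (Rabs (s0 - t)) with (s0 - t) by (rewrite Rabs_right; lra).
      pose proof (m_tri d Hm x (s (s1 x y t) (s2 x y t) l) y).
      pose proof (m_tri d Hm (s (s1 x y t) (s2 x y t) l) (s (s1 x y s0) (s2 x y s0) l) y).
      pose proof (m_sym d Hm (s (s1 x y t) (s2 x y t) l) (s (s1 x y s0) (s2 x y s0) l)).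
      pose proof (E0 t Ht). pose proof (E1 s0 Hs0). nra.
  - intros x y x' y' t Ht. eapply Rle_trans. apply Hc; auto.
    specialize (Hc1 x y x' y' t Ht). specialize (Hc2 x y x' y' t Ht). nra.
Qed.

Definition inv {X} (f : X -> X) : X -> X :=
  fun y => epsilon (inhabits y) (fun x => f x = y).

Lemma inv_r {X} (d : X -> X -> R) f : isometry d f -> forall y, f (inv f y) = y.
Proof.
  intros [_ Hs] y. unfold inv. apply (epsilon_spec (inhabits y) (fun x => f x = y)). auto.
Qed.

Lemma inv_l {X} (d : X -> X -> R) f : is_metric d -> isometry d f -> forall x, inv f (f x) = x.
Proof.
  intros Hm Hf x. pose proof (inv_r d f Hf (f x)).
  apply (m_eq d Hm). destruct Hf as [Hi _]. rewrite <- Hi, H. apply (m_self d Hm).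
Qed.

Lemma inv_iso {X} (d : X -> X -> R) f : is_metric d -> isometry d f -> isometry d (inv f).
Proof.
  intros Hm Hf. split.
  - intros x y. pose proof Hf as [Hi _]. rewrite <- Hi, !(inv_r d f Hf). reflexivity.
  - intros y. exists (f y). apply (inv_l d f Hm Hf).
Qed.

Definition Phi {X} (f : X -> X) (s : X -> X -> R -> X) : X -> X -> R -> X :=
  fun a b t => f (s (inv f a) (inv f b) t).

Definition Rv {X} (s : X -> X -> R -> X) : X -> X -> R -> X :=
  fun a b t => s b a (1 - t).

Lemma K0_Phi {X} (d : X -> X -> R) f s : is_metric d -> isometry d f -> K0 d s -> K0 d (Phi f s).
Proof.
  intros Hm Hf [Hb Hc]. pose proof (inv_iso d f Hm Hf) as [Hgi _].
  pose proof Hf as [Hi _]. unfold Phi. split.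
  - intros x y. destruct (Hb (inv f x) (inv f y)) as (A0&A1&A2).
    rewrite A0, A1, !(inv_r d f Hf). repeat split.
    intros s0 t Hs Ht. rewrite Hi, A2 by auto. rewrite Hgi. reflexivity.
  - intros x y x' y' t Ht. rewrite Hi, <- (Hgi x x'), <- (Hgi y y'). apply Hc; auto.
Qed.

Lemma K0_Rv {X} (d : X -> X -> R) s : is_metric d -> K0 d s -> K0 d (Rv s).
Proof.
  intros Hm [Hb Hc]. unfold Rv. split.
  - intros x y. destruct (Hb y x) as (A0&A1&A2).
    replace (1 - 0) with 1 by ring. replace (1 - 1) with 0 by ring.
    repeat split; auto. intros s0 t Hs Ht. rewrite A2 by lra.
    rewrite (m_sym d Hm y x). f_equal. rewrite <- Rabs_Ropp. f_equal. ring.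
  - intros x y x' y' t Ht. eapply Rle_trans. apply Hc; lra. lra.
Qed.

Lemma Rdiv_le_0_compat a b : 0 <= a -> 0 < b -> 0 <= a / b.
Proof. intros. unfold Rdiv. apply Rmult_le_pos; auto. left; apply Rinv_0_lt_compat; auto. Qed.

Lemma cvx_le L u v dl : 0 <= L <= 1 -> u <= dl -> v <= dl -> (1 - L) * u + L * v <= dl.
Proof. intros. assert (0 <= (1 - L) * (dl - u)) by (apply Rmult_le_pos; lra).
  assert (0 <= L * (dl - v)) by (apply Rmult_le_pos; lra). lra. Qed.

Definition Fn X := X -> X -> R -> X.

Definition Dle {X} (d : X -> X -> R) (r : R) (s s' : Fn X) : Prop :=
  forall a b t, 0 <= t <= 1 -> d (s a b t) (s' a b t) <= r.

Definition convex {X} (K : Fn X -> Prop) : Prop :=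
  forall s s1 s2 l, 0 <= l <= 1 -> K s -> K s1 -> K s2 -> K (comb s s1 s2 l).

Fixpoint avg {X} (s : Fn X) (l : list (Fn X)) : Fn X :=
  match l with
  | nil => s
  | y :: ys => comb s y (avg s ys) (INR (length ys) / INR (S (length ys)))
  end.

Lemma lam_range (m : nat) : 0 <= INR m / INR (S m) <= 1.
Proof.
  rewrite S_INR. pose proof (pos_INR m). split.
  - apply Rdiv_le_0_compat; lra.
  - apply Rmult_le_reg_r with (INR m + 1); [lra|].
    unfold Rdiv. rewrite Rmult_assoc, Rinv_l by lra. lra.
Qed.

Lemma avg_in {X} (K : Fn X -> Prop) s l : convex K -> K s -> (forall y, In y l -> K y) -> K (avg s l).
Proof.
  intros Hc Hs. induction l as [|y ys IH]; intros Hl; cbn [avg]; auto.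
  apply Hc; auto. apply lam_range. apply Hl; simpl; auto. apply IH. intros; apply Hl; simpl; auto.
Qed.

Lemma avg_bound1 {X} (d : X -> X -> R) s l a b t c dl : is_metric d -> K0 d s ->
  d (s a b t) c <= dl -> (forall y, In y l -> d (y a b t) c <= dl) ->
  d (avg s l a b t) c <= dl.
Proof.
  intros Hm Hs H0. induction l as [|y ys IH]; intros Hl; cbn [avg]; auto.
  unfold comb. eapply Rle_trans. apply (comb_dist d s Hm Hs). apply lam_range.
  pose proof (lam_range (length ys)).
  assert (d (y a b t) c <= dl) by (apply Hl; simpl; auto).
  assert (d (avg s ys a b t) c <= dl) by (apply IH; intros; apply Hl; simpl; auto).
  apply cvx_le; auto.
Qed.

Lemma key1 M A B dl e : 0 <= M -> A <= e -> B <= dl -> e <= dl ->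
  (1 - M / (M + 1)) * A + M / (M + 1) * B <= dl - (dl - e) / (M + 1).
Proof.
  intros. set (w := 1 / (M + 1)).
  assert (Hw : 0 < w <= 1).
  { unfold w. split. apply Rdiv_lt_0_compat; lra.
    apply Rmult_le_reg_r with (M + 1); [lra|]. unfold Rdiv. rewrite Rmult_assoc, Rinv_l by lra. lra. }
  replace (M / (M + 1)) with (1 - w) by (unfold w; field; lra).
  replace ((dl - e) / (M + 1)) with (w * (dl - e)) by (unfold w; field; lra).
  replace (1 - (1 - w)) with w by ring. nra.
Qed.

Lemma key2 M A B dl e : 1 <= M -> A <= dl -> B <= dl - (dl - e) / M -> e <= dl ->
  (1 - M / (M + 1)) * A + M / (M + 1) * B <= dl - (dl - e) / (M + 1).
Proof.
  intros. set (w := 1 / (M + 1)).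
  assert (Hw : 0 < w <= 1).
  { unfold w. split. apply Rdiv_lt_0_compat; lra.
    apply Rmult_le_reg_r with (M + 1); [lra|]. unfold Rdiv. rewrite Rmult_assoc, Rinv_l by lra. lra. }
  replace (M / (M + 1)) with (1 - w) by (unfold w; field; lra).
  replace ((dl - e) / (M + 1)) with (w * (dl - e)) by (unfold w; field; lra).
  assert (Hid : (1 - w) * ((dl - e) / M) = w * (dl - e)) by (unfold w; field; lra).
  replace (1 - (1 - w)) with w by ring.
  assert (0 <= (dl - e) / M) by (apply Rdiv_le_0_compat; lra).
  nra.
Qed.

Lemma avg_bound2 {X} (d : X -> X -> R) s l a b t c dl e : is_metric d -> K0 d s ->
  e <= dl ->
  d (s a b t) c <= dl -> (forall y, In y l -> d (y a b t) c <= dl) ->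
  (exists y, In y l /\ d (y a b t) c <= e) ->
  d (avg s l a b t) c <= dl - (dl - e) / INR (length l).
Proof.
  intros Hm Hs He H0. induction l as [|y ys IH]; intros Hl Hex.
  { destruct Hex as (?&[]&_). }
  cbn [avg]. unfold comb. eapply Rle_trans. apply (comb_dist d s Hm Hs). apply lam_range.
  change (length (y :: ys)) with (S (length ys)). rewrite !S_INR.
  assert (HM : 0 <= INR (length ys)) by apply pos_INR.
  assert (Hy : d (y a b t) c <= dl) by (apply Hl; simpl; auto).
  assert (Ha : d (avg s ys a b t) c <= dl)
    by (apply avg_bound1; auto; intros; apply Hl; simpl; auto).
  destruct (Rle_dec (d (y a b t) c) e) as [Hye|Hye].
  - apply key1; auto.
  - destruct Hex as (y'&[<-|Hin]&Hy'); [lra|].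
    assert (Hys : (0 < length ys)%nat) by (destruct ys; simpl in *; [contradiction|lia]).
    assert (HM1 : 1 <= INR (length ys)) by (apply (le_INR 1); lia).
    apply key2; auto. apply IH. intros; apply Hl; simpl; auto. exists y'; auto.
Qed.

Lemma reps {X} (d : X -> X -> R) (K : Fn X -> Prop) (eta : R) : forall (C : list (Fn X -> Prop)),
  (forall s, K s -> K0 d s) ->
  (forall c, In c C -> forall s s', K0 d s -> K0 d s' -> c s -> c s' -> Dle d eta s s') ->
  exists L, (forall y, In y L -> K y) /\ (length L <= length C)%nat /\
    forall x, K x -> forall c, In c C -> c x -> exists y, In y L /\ Dle d eta x y.
Proof.
  intros C HK. induction C as [|c C IH]; intros Hc.
  - exists nil. split; [|split]. intros _ []. simpl; lia. intros _ _ _ [].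
  - destruct IH as (L&HL1&HL2&HL3). { intros c' Hc'; apply (Hc c'); simpl; auto. }
    destruct (classic (exists y, K y /\ c y)) as [(y&Hy1&Hy2)|Hn].
    + exists (y :: L). simpl. repeat split.
      * intros z [<-|Hz]; auto.
      * lia.
      * intros x Hx c' [<-|Hc'] Hcx.
        -- exists y. split; auto. apply (Hc c); simpl; auto.
        -- destruct (HL3 x Hx c' Hc' Hcx) as (y'&?&?). exists y'; auto.
    + exists L. simpl. repeat split; auto.
      intros x Hx c' [<-|Hc'] Hcx.
      * exfalso; apply Hn; exists x; auto.
      * apply (HL3 x Hx c' Hc' Hcx).
Qed.

Lemma div_anti a p q : 0 <= a -> 0 < p -> p <= q -> a / q <= a / p.
Proof.
  intros. unfold Rdiv. apply Rmult_le_compat_l; auto. apply Rinv_le_contravar; auto.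
Qed.

Lemma normal {X} (d : X -> X -> R) (K : Fn X -> Prop) (C : list (Fn X -> Prop)) eta dl :
  is_metric d -> (forall s, K s -> K0 d s) -> convex K ->
  (forall s, K0 d s -> exists c, In c C /\ c s) ->
  (forall c, In c C -> forall s s', K0 d s -> K0 d s' -> c s -> c s' -> Dle d eta s s') ->
  (exists z, K z) -> (forall x y, K x -> K y -> Dle d dl x y) -> eta <= dl ->
  exists z, K z /\ forall x, K x -> Dle d (dl - (dl - eta) / INR (length C)) z x.
Proof.
  intros Hm HK Hcv Hcov Hc [s0 Hs0] Hdiam Hed.
  destruct (reps d K eta C HK Hc) as (L&HL1&HL2&HL3).
  exists (avg s0 L). split. apply avg_in; auto.
  intros x Hx a b t Ht.
  destruct (Hcov x (HK x Hx)) as (c&Hc1&Hc2).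
  destruct (HL3 x Hx c Hc1 Hc2) as (y&Hy1&Hy2).
  eapply Rle_trans. apply (avg_bound2 d s0 L a b t (x a b t) dl eta Hm (HK s0 Hs0) Hed).
  - apply Hdiam; auto.
  - intros y' Hy'. apply Hdiam; auto.
  - exists y. split; auto. rewrite (m_sym d Hm). apply Hy2; auto.
  - assert (1 <= length L)%nat by (destruct L; simpl in *; [contradiction|lia]).
    assert (E1 : 0 < INR (length L)) by (apply (lt_INR 0); lia).
    assert (E2 : INR (length L) <= INR (length C)) by (apply le_INR; lia).
    pose proof (div_anti (dl - eta) (INR (length L)) (INR (length C)) ltac:(lra) E1 E2). apply Rplus_le_compat_l, Ropp_le_contravar; assumption.
Qed.

Lemma nets {X} (d : X -> X -> R) : is_metric d -> compact_metric d ->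
  forall e, 0 < e -> exists A : list X, forall x, exists a, In a A /\ d x a < e.
Proof.
  intros Hm Hk e He.
  destruct (Hk X (fun a x => d a x < e)) as (l&Hl).
  - intros a x Hx. exists (e - d a x). split; [lra|]. intros y Hy.
    pose proof (m_tri d Hm a x y). lra.
  - intros x. exists x. rewrite (m_self d Hm). auto.
  - exists l. intros x. destruct (Hl x) as (i&?&?). exists i. rewrite (m_sym d Hm). auto.
Qed.

Lemma list_bound {X} (f : X -> R) (l : list X) : exists B, forall x, In x l -> f x <= B.
Proof.
  induction l as [|a l [B HB]].
  - exists 0. intros _ [].
  - exists (Rmax (f a) B). intros x [<-|Hx]. apply Rmax_l.
    eapply Rle_trans. apply HB; auto. apply Rmax_r.
Qed.

Lemma list_bound2 {X} (d : X -> X -> R) (l : list X) :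
  exists B, forall x y, In x l -> In y l -> d x y <= B.
Proof.
  induction l as [|a l [B HB]].
  - exists 0. intros _ _ [].
  - destruct (list_bound (d a) (a :: l)) as [B1 HB1].
    destruct (list_bound (fun x => d x a) (a :: l)) as [B2 HB2].
    exists (Rmax B (Rmax B1 B2)). intros x y [<-|Hx] [<-|Hy].
    + eapply Rle_trans. apply HB1; simpl; auto. eapply Rle_trans; [apply Rmax_l|apply Rmax_r].
    + eapply Rle_trans. apply HB1; simpl; auto. eapply Rle_trans; [apply Rmax_l|apply Rmax_r].
    + eapply Rle_trans. apply (HB2 x); simpl; auto. eapply Rle_trans; [apply Rmax_r|apply Rmax_r].
    + eapply Rle_trans. apply HB; auto. apply Rmax_l.
Qed.

Lemma mbounded {X} (d : X -> X -> R) : is_metric d -> compact_metric d ->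
  exists B, 0 < B /\ forall x y, d x y <= B.
Proof.
  intros Hm Hk. destruct (nets d Hm Hk 1 ltac:(lra)) as [A HA].
  destruct (list_bound2 d A) as [B HB].
  exists (Rmax 1 (B + 2)). split. eapply Rlt_le_trans; [|apply Rmax_l]; lra.
  intros x y. destruct (HA x) as (a&Ha1&Ha2). destruct (HA y) as (b&Hb1&Hb2).
  pose proof (m_tri d Hm x a y). pose proof (m_tri d Hm a b y).
  pose proof (HB a b Ha1 Hb1). rewrite (m_sym d Hm y b) in Hb2.
  eapply Rle_trans; [|apply Rmax_r]. lra.
Qed.

Lemma list_max_nat (l : list nat) : exists N, forall i, In i l -> (i <= N)%nat.
Proof.
  induction l as [|a l [N HN]].
  - exists 0%nat. intros _ [].
  - exists (Nat.max a N). intros i [<-|Hi]. lia. specialize (HN i Hi). lia.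
Qed.

Lemma mcomplete {X} (d : X -> X -> R) : is_metric d -> compact_metric d ->
  forall u : nat -> X,
  (forall e, 0 < e -> exists N, forall m n, (N <= m)%nat -> (N <= n)%nat -> d (u m) (u n) < e) ->
  exists v, forall e, 0 < e -> exists N, forall n, (N <= n)%nat -> d (u n) v < e.
Proof.
  intros Hm Hk u Hc. apply NNPP. intros Hn.
  set (U := fun (N : nat) y => exists e, 0 < e /\ forall n, (N <= n)%nat -> e <= d (u n) y).
  destruct (Hk nat U) as (l&Hl).
  - intros N y (e&He&Hy). exists (e / 2). split; [lra|]. intros y' Hy'.
    exists (e / 2). split; [lra|]. intros n Hn'. specialize (Hy n Hn').
    pose proof (m_tri d Hm (u n) y' y). rewrite (m_sym d Hm y' y) in H. lra.
  - intros y. assert (Hny : ~ forall e, 0 < e -> exists N, forall n, (N <= n)%nat -> d (u n) y < e).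
    { intros H. apply Hn. exists y. auto. }
    apply not_all_ex_not in Hny. destruct Hny as [e He].
    apply imply_to_and in He. destruct He as [He He'].
    destruct (Hc (e / 2) ltac:(lra)) as [N0 HN0].
    exists N0. exists (e / 2). split; [lra|]. intros n Hn0.
    apply NNPP. intros Hlt. apply He'. exists n. intros m Hm0.
    apply NNPP. intros Hge.
    apply Hlt. apply Rnot_lt_le in Hge.
    pose proof (m_tri d Hm (u m) (u n) y). specialize (HN0 m n ltac:(lia) Hn0). lra.
  - destruct (list_max_nat l) as [N HN].
    destruct (Hl (u N)) as (i&Hi1&(e&He&Hi2)).
    specialize (Hi2 N (HN i Hi1)). rewrite (m_self d Hm) in Hi2. lra.
Qed.

Fixpoint all_codes {X} (A : list X) (n : nat) : list (list X) :=
  match n with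
  | O => nil :: nil
  | S n => flat_map (fun c => map (fun a => a :: c) A) (all_codes A n)
  end.

Lemma codes_cover {X Q} (A : list X) (R : Q -> X -> Prop) : forall (g : list Q),
  (forall q, In q g -> exists a, In a A /\ R q a) ->
  exists c, In c (all_codes A (length g)) /\ Forall2 R g c.
Proof.
  induction g as [|q g IH]; intros H.
  - exists nil. simpl. split; auto.
  - destruct IH as (c&Hc1&Hc2). { intros; apply H; simpl; auto. }
    destruct (H q) as (a&Ha1&Ha2). simpl; auto.
    exists (a :: c). split.
    + simpl. apply in_flat_map. exists c. split; auto. apply in_map_iff; exists a; auto.
    + constructor; auto.
Qed.

Lemma Forall2_common {Q X} (R1 R2 : Q -> X -> Prop) g c :
  Forall2 R1 g c -> Forall2 R2 g c -> forall q, In q g -> exists e, R1 q e /\ R2 q e.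
Proof.
  intros H1. induction H1 as [|q e g c Hqe H1 IH]; intros H2 q' Hq'.
  - destruct Hq'.
  - inversion H2; subst. destruct Hq' as [<-|Hq'].
    + exists e; auto.
    + apply IH; auto.
Qed.

Lemma floor_nat : forall (M : nat) s, 0 <= s <= INR M -> exists k, (k <= M)%nat /\ INR k <= s <= INR k + 1.
Proof.
  induction M as [|M IH]; intros s Hs.
  - exists 0%nat. simpl in *. split; [lia|lra].
  - rewrite S_INR in Hs. destruct (Rle_dec s (INR M)).
    + destruct (IH s ltac:(lra)) as (k&?&?). exists k. split; [lia|lra].
    + exists M. split; [lia|lra].
Qed.

Definition app3 {X} (s : Fn X) (q : X * X * R) : X := s (fst (fst q)) (snd (fst q)) (snd q).

Lemma cells {X} (d : X -> X -> R) : is_metric d -> compact_metric d ->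
  forall eta, 0 < eta -> exists C : list (Fn X -> Prop),
    (forall s, K0 d s -> exists c, In c C /\ c s) /\
    (forall c, In c C -> forall s s', K0 d s -> K0 d s' -> c s -> c s' -> Dle d eta s s').
Proof.
  intros Hm Hk eta Heta. set (e := eta / 6).
  assert (He : 0 < e) by (unfold e; lra).
  destruct (nets d Hm Hk e He) as [A HA].
  destruct (mbounded d Hm Hk) as (B&HB0&HB).
  destruct (INR_archimed e B He) as [M HM].
  assert (HM1 : (1 <= M)%nat).
  { destruct M; [simpl in HM; lra|lia]. }
  assert (HMp : 0 < INR M) by (apply (lt_INR 0); lia).
  set (grid := flat_map (fun a => flat_map (fun b =>
        map (fun k => (a, b, INR k / INR M)) (seq 0 (S M))) A) A).
  exists (map (fun c => fun s => Forall2 (fun q a => d (app3 s q) a < e) grid c)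
              (all_codes A (length grid))).
  split.
  - intros s Hs.
    destruct (codes_cover A (fun q a => d (app3 s q) a < e) grid) as (c&Hc1&Hc2).
    { intros q _. destruct (HA (app3 s q)) as (a&?&?). exists a; auto. }
    exists (fun s => Forall2 (fun q a => d (app3 s q) a < e) grid c). split; auto.
    apply in_map_iff. exists c; auto.
  - intros cl Hcl s s' Hs Hs' H1 H2.
    apply in_map_iff in Hcl. destruct Hcl as (c&<-&_).
    intros a b t Ht.
    destruct (HA a) as (a'&Ha1&Ha2). destruct (HA b) as (b'&Hb1&Hb2).
    destruct (floor_nat M (t * INR M)) as (k&Hk1&Hk2).
    { split. apply Rmult_le_pos; lra. rewrite <- (Rmult_1_l (INR M)) at 2.
      apply Rmult_le_compat_r; lra. }
    set (tk := INR k / INR M).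
    assert (Htk : 0 <= tk <= 1).
    { unfold tk. split. apply Rdiv_le_0_compat; [apply pos_INR|auto].
      apply Rmult_le_reg_r with (INR M); auto. unfold Rdiv.
      rewrite Rmult_assoc, Rinv_l by lra. rewrite Rmult_1_r, Rmult_1_l. apply le_INR; auto. }
    assert (Hdt : Rabs (t - tk) * INR M <= 1).
    { unfold tk. replace (t - INR k / INR M) with ((t * INR M - INR k) / INR M) by (field; lra).
      unfold Rdiv. rewrite Rabs_mult, Rabs_inv, (Rabs_right (INR M)) by lra.
      rewrite Rmult_assoc, Rinv_l by lra. rewrite Rmult_1_r.
      apply Rabs_le; lra. }
    assert (Hq : In (a', b', tk) grid).
    { unfold grid. apply in_flat_map. exists a'. split; auto.
      apply in_flat_map. exists b'. split; auto. apply in_map_iff. exists k.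
      split; auto. apply in_seq. lia. }
    destruct (Forall2_common _ _ grid c H1 H2 _ Hq) as (x&Hx1&Hx2).
    unfold app3 in Hx1, Hx2; simpl in Hx1, Hx2.
    assert (Gen : forall s0, K0 d s0 -> d (s0 a b t) (s0 a' b' tk) <= 2 * e).
    { intros s0 [Hb Hc].
      pose proof (Hc a b a' b' t Ht).
      destruct (Hb a' b') as (_&_&Hg). specialize (Hg t tk Ht Htk).
      pose proof (m_tri d Hm (s0 a b t) (s0 a' b' t) (s0 a' b' tk)).
      pose proof (HB a' b').
      assert (Rabs (t - tk) * d a' b' <= e).
      { assert (Rabs (t - tk) * d a' b' <= Rabs (t - tk) * B).
        { apply Rmult_le_compat_l; auto. apply Rabs_pos. }
        assert (Rabs (t - tk) * B * INR M <= B).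
        { replace (Rabs (t - tk) * B * INR M) with (Rabs (t - tk) * INR M * B) by ring.
          rewrite <- (Rmult_1_l B) at 2. apply Rmult_le_compat_r; lra. }
        assert (Rabs (t - tk) * B * INR M < e * INR M) by lra.
        assert (Rabs (t - tk) * B < e).
        { apply Rmult_lt_reg_r with (INR M); auto. }
        lra. }
      assert ((1 - t) * d a a' + t * d b b' <= e).
      { pose proof (m_pos d Hm a a'). pose proof (m_pos d Hm b b').
        apply cvx_le; lra. }
      lra. }
    pose proof (Gen s Hs). pose proof (Gen s' Hs').
    pose proof (m_tri d Hm (s a b t) (s a' b' tk) x).
    pose proof (m_tri d Hm (s a b t) x (s' a b t)).
    pose proof (m_tri d Hm x (s' a' b' tk) (s' a b t)).
    rewrite (m_sym d Hm x (s' a' b' tk)) in *.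
    rewrite (m_sym d Hm (s' a' b' tk) (s' a b t)) in *.
    unfold e in *. lra.
Qed.

Definition Pdef {X} (d : X -> X -> R) (K : Fn X -> Prop) (r : R) : Prop :=
  0 <= r /\ exists z, K z /\ forall x, K x -> Dle d r z x.

Definition Qdef {X} (d : X -> X -> R) (K : Fn X -> Prop) (dl r : R) : Prop :=
  Pdef d K r /\ r <= dl /\ forall r', Pdef d K r' -> r <= (r' + dl) / 2.

Lemma Pdef_mono {X} (d : X -> X -> R) K r r' : Pdef d K r -> r <= r' -> Pdef d K r'.
Proof.
  intros (H0&z&Hz&Hx) Hr. split; [lra|]. exists z. split; auto.
  intros x Kx a b t Ht. specialize (Hx x Kx a b t Ht). lra.
Qed.

Lemma Q_exists {X} (d : X -> X -> R) K dl : Pdef d K dl -> exists r, Qdef d K dl r.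
Proof.
  intros HP.
  set (E := fun v => exists r, Pdef d K r /\ v = - r).
  assert (Hb : bound E).
  { exists 0. intros v (r&(Hr&_)&->). lra. }
  assert (Hne : exists v, E v) by (exists (- dl); exists dl; auto).
  destruct (completeness E Hb Hne) as [m [Hm1 Hm2]].
  assert (Hlow : forall r, Pdef d K r -> - m <= r).
  { intros r Hr. assert (- r <= m) by (apply Hm1; exists r; auto). lra. }
  assert (Hdl : - m <= dl) by (apply Hlow; auto).
  destruct (Req_dec (- m) dl) as [Heq|Hneq].
  - exists dl. split; auto. split; [lra|]. intros r' Hr'. pose proof (Hlow r' Hr'). lra.
  - set (r0 := (- m + dl) / 2).
    assert (Hex : exists r, Pdef d K r /\ r < r0).
    { apply NNPP. intros Hn.
      assert (m <= - r0).
      { apply Hm2. intros v (r&Hr&->). apply Ropp_le_contravar.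
        apply Rnot_lt_le. intros Hlt. apply Hn. exists r; auto. }
      unfold r0 in H. lra. }
    destruct Hex as (r&Hr&Hrr0).
    exists r0. split; [apply (Pdef_mono d K r); auto; lra|].
    split. unfold r0; lra.
    intros r' Hr'. pose proof (Hlow r' Hr'). unfold r0. lra.
Qed.

Definition nextK {X} (d : X -> X -> R) (K : Fn X -> Prop) (dl : R) : (Fn X -> Prop) * R :=
  let r := epsilon (inhabits 0) (Qdef d K dl) in
  (fun z => K z /\ forall x, K x -> Dle d r z x, r).

Definition Inv {X} (d : X -> X -> R) (K : Fn X -> Prop) (dl : R) : Prop :=
  (forall s, K s -> K0 d s) /\ convex K /\
  (forall f, isometry d f -> forall s, K s -> K (Phi f s)) /\
  (forall s, K s -> K (Rv s)) /\
  (exists z, K z) /\ (forall x y, K x -> K y -> Dle d dl x y) /\ 0 <= dl.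

Lemma next_inv {X} (d : X -> X -> R) K dl : is_metric d -> Inv d K dl ->
  Inv d (fst (nextK d K dl)) (snd (nextK d K dl)) /\
  (forall s, fst (nextK d K dl) s -> K s) /\
  snd (nextK d K dl) <= dl /\
  (forall r', Pdef d K r' -> snd (nextK d K dl) <= (r' + dl) / 2).
Proof.
  intros Hm (HK0&Hcv&HPhi&HRv&(z0&Hz0)&Hdiam&Hdl0).
  assert (HP : Pdef d K dl) by (split; auto; exists z0; split; auto).
  pose proof (epsilon_spec (inhabits 0) (Qdef d K dl) (Q_exists d K dl HP)) as HQ.
  unfold nextK; simpl. set (r := epsilon (inhabits 0) (Qdef d K dl)) in *.
  destruct HQ as ((Hr0&z&Hz&Hzx)&Hrdl&Hrmin).
  split; [|split; [|split]]; auto.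
  - split; [|split; [|split; [|split; [|split; [|split]]]]]; auto.
    + intros s [Hs _]; auto.
    + intros s s1 s2 l Hl [Hs _] [Hs1 Hs1'] [Hs2 Hs2']. split. apply Hcv; auto.
      intros x Hx a b t Ht. unfold comb.
      eapply Rle_trans. apply (comb_dist d s Hm (HK0 s Hs)); auto.
      apply cvx_le; auto. apply Hs1'; auto. apply Hs2'; auto.
    + intros f Hf s [Hs Hs']. split. apply HPhi; auto.
      intros x Hx a b t Ht. unfold Phi.
      pose proof (inv_iso d f Hm Hf) as Hg.
      pose proof (Hs' (Phi (inv f) x) (HPhi _ Hg x Hx) (inv f a) (inv f b) t Ht) as H.
      unfold Phi in H. rewrite !(inv_l d (inv f) Hm Hg) in H.
      destruct Hf as [Hi Hsur]. rewrite <- Hi in H. rewrite (inv_r d f (conj Hi Hsur)) in H. exact H.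
    + intros s [Hs Hs']. split. apply HRv; auto.
      intros x Hx a b t Ht. unfold Rv.
      pose proof (Hs' (Rv x) (HRv x Hx) b a (1 - t) ltac:(lra)) as H.
      unfold Rv in H. replace (1 - (1 - t)) with t in H by ring. exact H.
    + exists z. split; auto.
    + intros x y [Hx _] [Hy Hy']. intros a b t Ht. rewrite (m_sym d Hm). apply Hy'; auto.
  - intros s [Hs _]; auto.
Qed.

Definition seqK {X} (d : X -> X -> R) (B : R) (n : nat) : (Fn X -> Prop) * R :=
  nat_rect (fun _ => ((Fn X -> Prop) * R)%type) (K0 d, B)
    (fun _ p => nextK d (fst p) (snd p)) n.

Lemma seqK_S {X} (d : X -> X -> R) B n :
  seqK d B (S n) = nextK d (fst (seqK d B n)) (snd (seqK d B n)).
Proof. reflexivity. Qed.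

Lemma inv0 {X} (d : X -> X -> R) B : is_metric d -> (exists s, K0 d s) -> 0 < B ->
  (forall x y, d x y <= B) -> Inv d (K0 d) B.
Proof.
  intros Hm Hne HB0 HB. split; [|split; [|split; [|split; [|split; [|split]]]]]; auto.
  - intros s s1 s2 l Hl ???. apply K0_comb; auto.
  - intros f Hf s Hs. apply K0_Phi; auto.
  - intros s Hs. apply K0_Rv; auto.
  - intros x y _ _ a b t _. apply HB.
  - lra.
Qed.

Lemma seq_inv {X} (d : X -> X -> R) B : is_metric d -> Inv d (K0 d) B ->
  forall n, Inv d (fst (seqK d B n)) (snd (seqK d B n)).
Proof.
  intros Hm H0. induction n as [|n IH]. exact H0.
  rewrite seqK_S. apply next_inv; auto.
Qed.

Lemma seq_nest {X} (d : X -> X -> R) B : is_metric d -> Inv d (K0 d) B ->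
  forall n m, (n <= m)%nat -> forall s, fst (seqK d B m) s -> fst (seqK d B n) s.
Proof.
  intros Hm H0 n m Hnm. induction Hnm as [|m Hnm IH]; auto.
  intros s Hs. apply IH. rewrite seqK_S in Hs.
  apply (next_inv d _ _ Hm (seq_inv d B Hm H0 m)); auto.
Qed.

Lemma seq_dec {X} (d : X -> X -> R) B : is_metric d -> Inv d (K0 d) B ->
  forall n m, (n <= m)%nat -> snd (seqK d B m) <= snd (seqK d B n).
Proof.
  intros Hm H0 n m Hnm. induction Hnm as [|m Hnm IH]; [lra|].
  rewrite seqK_S. eapply Rle_trans; [|exact IH].
  apply (next_inv d _ _ Hm (seq_inv d B Hm H0 m)).
Qed.

Lemma seq_to0 {X} (d : X -> X -> R) B : is_metric d -> compact_metric d -> Inv d (K0 d) B ->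
  forall e, 0 < e -> exists n, snd (seqK d B n) < e.
Proof.
  intros Hm Hk H0 e He. set (eta := e / 2).
  destruct (cells d Hm Hk eta ltac:(unfold eta; lra)) as (C&Hcov&Hcd).
  assert (HN : (1 <= length C)%nat).
  { destruct H0 as (_&_&_&_&(z&Hz)&_). destruct (Hcov z Hz) as (c&Hc&_).
    destruct C; simpl in *; [contradiction|lia]. }
  set (N := INR (length C)).
  assert (HN1 : 1 <= N) by (apply (le_INR 1); auto).
  apply NNPP. intros Hn.
  assert (Hge : forall n, e <= snd (seqK d B n)).
  { intros n. apply Rnot_lt_le. intros Hlt. apply Hn. exists n; auto. }
  assert (Hstep : forall n, snd (seqK d B (S n)) <= snd (seqK d B n) - eta / (2 * N)).
  { intros n. pose proof (seq_inv d B Hm H0 n) as Hi.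
    pose proof Hi as (HK0&Hcv&_&_&Hne&Hdiam&Hd0).
    set (dn := snd (seqK d B n)) in *. set (Kn := fst (seqK d B n)) in *.
    assert (Hed : eta <= dn) by (pose proof (Hge n); unfold eta, dn in *; lra).
    destruct (normal d Kn C eta dn Hm HK0 Hcv Hcov Hcd Hne Hdiam Hed) as (z&Hz&Hzx).
    assert (HP : Pdef d Kn (dn - (dn - eta) / N)).
    { split.
      - assert ((dn - eta) / N <= dn - eta).
        { unfold Rdiv. rewrite <- (Rmult_1_r (dn - eta)) at 2.
          apply Rmult_le_compat_l; [lra|]. rewrite <- Rinv_1. apply Rinv_le_contravar; lra. }
        unfold eta in *. lra.
      - exists z. split; auto. }
    rewrite seqK_S. pose proof (next_inv d Kn dn Hm Hi) as (_&_&_&Hmin).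
    specialize (Hmin _ HP).
    assert (eta / N <= (dn - eta) / N).
    { unfold Rdiv. apply Rmult_le_compat_r. left; apply Rinv_0_lt_compat; lra.
      pose proof (Hge n). unfold eta, dn in *. lra. }
    replace (eta / (2 * N)) with ((eta / N) / 2) by (field; lra).
    fold Kn dn. lra. }
  assert (Hlin : forall n, snd (seqK d B n) <= B - INR n * (eta / (2 * N))).
  { induction n as [|n IH].
    - simpl. lra.
    - rewrite S_INR. pose proof (Hstep n). lra. }
  assert (Hp : 0 < eta / (2 * N)) by (apply Rdiv_lt_0_compat; unfold eta; lra).
  destruct (INR_archimed (eta / (2 * N)) B Hp) as [n Hn'].
  pose proof (Hlin n). pose proof (Hge n). lra.
Qed.

Lemma le_eps x y : (forall e, 0 < e -> x <= y + e) -> x <= y.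
Proof.
  intros H. apply Rnot_lt_le. intros Hlt. specialize (H ((x - y) / 2) ltac:(lra)). lra.
Qed.

Theorem lemma4p5 (X : Type) (d : X -> X -> R) :
  is_metric d -> compact_metric d ->
  (exists sigma : X -> X -> R -> X, bicombing d sigma /\ conical d sigma) ->
  exists tau : X -> X -> R -> X,
    bicombing d tau /\ conical d tau /\ reversible tau /\ iso_equivariant d tau.
Proof.
  intros Hm Hk (s0&Hs0b&Hs0c).
  assert (Hs0 : K0 d s0) by (split; auto).
  destruct (mbounded d Hm Hk) as (B&HB0&HB).
  pose proof (inv0 d B Hm (ex_intro _ s0 Hs0) HB0 HB) as H0.
  set (Kn := fun n => fst (seqK d B n)).
  set (dn := fun n => snd (seqK d B n)).
  assert (Hinv : forall n, Inv d (Kn n) (dn n)) by (intros; apply seq_inv; auto).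
  assert (Hnest : forall n m, (n <= m)%nat -> forall s, Kn m s -> Kn n s)
    by (intros; eapply seq_nest; eauto).
  assert (Hdec : forall n m, (n <= m)%nat -> dn m <= dn n) by (intros; apply seq_dec; auto).
  assert (H0' : forall e, 0 < e -> exists n, dn n < e) by (intros; apply seq_to0; auto).
  set (z := fun n => epsilon (inhabits s0) (Kn n)).
  assert (Hz : forall n, Kn n (z n)).
  { intros n. unfold z. apply epsilon_spec. destruct (Hinv n) as (_&_&_&_&Hne&_). exact Hne. }
  assert (HzK0 : forall n, K0 d (z n)).
  { intros n. destruct (Hinv n) as (HK&_). auto. }
  assert (Hzz : forall n m, (n <= m)%nat -> Dle d (dn n) (z n) (z m)).
  { intros n m Hnm. destruct (Hinv n) as (_&_&_&_&_&Hd&_). apply Hd; auto. apply (Hnest n m); auto. }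
  set (tau := fun a b t => epsilon (inhabits a)
          (fun v => forall e, 0 < e -> exists N, forall n, (N <= n)%nat -> d (z n a b t) v < e)).
  assert (Hclose : forall n a b t, 0 <= t <= 1 -> d (tau a b t) (z n a b t) <= dn n).
  { intros n a b t Ht.
    assert (Hlim : forall e, 0 < e -> exists N, forall k, (N <= k)%nat -> d (z k a b t) (tau a b t) < e).
    { unfold tau. apply epsilon_spec.
      apply (mcomplete d Hm Hk (fun k => z k a b t)).
      intros e He. destruct (H0' (e / 2) ltac:(lra)) as [N HN]. exists N. intros m k Hm' Hk'.
      pose proof (Hzz N k Hk' a b t Ht). pose proof (Hzz N m Hm' a b t Ht).
      pose proof (m_tri d Hm (z m a b t) (z N a b t) (z k a b t)).
      rewrite (m_sym d Hm (z m a b t) (z N a b t)) in *. lra. }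
    apply le_eps. intros e He. destruct (Hlim e He) as [N HN].
    specialize (HN (Nat.max N n) ltac:(lia)).
    pose proof (Hzz n (Nat.max N n) ltac:(lia) a b t Ht).
    pose proof (m_tri d Hm (tau a b t) (z (Nat.max N n) a b t) (z n a b t)).
    rewrite (m_sym d Hm (z (Nat.max N n) a b t) (tau a b t)) in HN.
    rewrite (m_sym d Hm (z n a b t) _) in H. lra. }
  assert (Hsmall : forall x y, (forall n, x <= y + 3 * dn n) -> x <= y).
  { intros x y H. apply le_eps. intros e He. destruct (H0' (e / 3) ltac:(lra)) as [n Hn].
    specialize (H n). lra. }
  assert (Heq : forall u v, (forall n, d u v <= 3 * dn n) -> u = v).
  { intros u v H. apply (m_eq d Hm). apply Rle_antisym.
    apply Hsmall. intros n. specialize (H n). lra. apply (m_pos d Hm). }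
  exists tau. split; [|split; [|split]].
  - intros x y. split; [|split].
    + apply Heq. intros n. pose proof (Hclose n x y 0 ltac:(lra)).
      destruct (HzK0 n) as [Hb _]. destruct (Hb x y) as (E0&_). rewrite E0 in H.
      pose proof (dn_nonneg := Hinv n). destruct dn_nonneg as (_&_&_&_&_&_&Hd). lra.
    + apply Heq. intros n. pose proof (Hclose n x y 1 ltac:(lra)).
      destruct (HzK0 n) as [Hb _]. destruct (Hb x y) as (_&E1&_). rewrite E1 in H.
      pose proof (dn_nonneg := Hinv n). destruct dn_nonneg as (_&_&_&_&_&_&Hd). lra.
    + intros s t Hs Ht. apply Rle_antisym.
      * apply Hsmall. intros n. destruct (HzK0 n) as [Hb _]. destruct (Hb x y) as (_&_&Hg).
        pose proof (Hg s t Hs Ht). pose proof (Hclose n x y s Hs). pose proof (Hclose n x y t Ht).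
        pose proof (m_tri d Hm (tau x y s) (z n x y s) (tau x y t)).
        pose proof (m_tri d Hm (z n x y s) (z n x y t) (tau x y t)).
        rewrite (m_sym d Hm (z n x y t) (tau x y t)) in *.
        pose proof (dn_nonneg := Hinv n). destruct dn_nonneg as (_&_&_&_&_&_&Hd). lra.
      * apply Hsmall. intros n. destruct (HzK0 n) as [Hb _]. destruct (Hb x y) as (_&_&Hg).
        pose proof (Hg s t Hs Ht). pose proof (Hclose n x y s Hs). pose proof (Hclose n x y t Ht).
        pose proof (m_tri d Hm (z n x y s) (tau x y s) (z n x y t)).
        pose proof (m_tri d Hm (tau x y s) (tau x y t) (z n x y t)).
        rewrite (m_sym d Hm (z n x y s) (tau x y s)) in *.
        pose proof (dn_nonneg := Hinv n). destruct dn_nonneg as (_&_&_&_&_&_&Hd). lra.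
  - intros x y x' y' t Ht. apply Hsmall. intros n.
    destruct (HzK0 n) as [_ Hc]. pose proof (Hc x y x' y' t Ht).
    pose proof (Hclose n x y t Ht). pose proof (Hclose n x' y' t Ht).
    pose proof (m_tri d Hm (tau x y t) (z n x y t) (tau x' y' t)).
    pose proof (m_tri d Hm (z n x y t) (z n x' y' t) (tau x' y' t)).
    rewrite (m_sym d Hm (z n x' y' t) (tau x' y' t)) in *.
    pose proof (dn_nonneg := Hinv n). destruct dn_nonneg as (_&_&_&_&_&_&Hd). lra.
  - intros x y t Ht. apply Heq. intros n.
    destruct (Hinv n) as (_&_&_&HRv&_&Hd&Hd0).
    pose proof (Hd (z n) (Rv (z n)) (Hz n) (HRv _ (Hz n)) x y t Ht) as H1. unfold Rv in H1.
    pose proof (Hclose n x y t Ht). pose proof (Hclose n y x (1 - t) ltac:(lra)).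
    pose proof (m_tri d Hm (tau x y t) (z n x y t) (tau y x (1 - t))).
    pose proof (m_tri d Hm (z n x y t) (z n y x (1 - t)) (tau y x (1 - t))).
    rewrite (m_sym d Hm (z n y x (1 - t)) (tau y x (1 - t))) in *. lra.
  - intros f Hf x y t Ht. apply Heq. intros n.
    destruct (Hinv n) as (_&_&HPhi&_&_&Hd&Hd0).
    pose proof (Hd (z n) (Phi f (z n)) (Hz n) (HPhi f Hf _ (Hz n)) (f x) (f y) t Ht) as H1.
    unfold Phi in H1. rewrite !(inv_l d f Hm Hf) in H1.
    pose proof (Hclose n x y t Ht). pose proof (Hclose n (f x) (f y) t Ht).
    pose proof Hf as [Hi _].
    pose proof (m_tri d Hm (f (tau x y t)) (f (z n x y t)) (tau (f x) (f y) t)).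
    pose proof (m_tri d Hm (f (z n x y t)) (z n (f x) (f y) t) (tau (f x) (f y) t)).
    rewrite Hi in *.
    rewrite (m_sym d Hm (z n (f x) (f y) t) (tau (f x) (f y) t)) in *.
    rewrite (m_sym d Hm (z n (f x) (f y) t) (f (z n x y t))) in *. lra.
Qed.
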